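(* Let $\mathcal G$ be an ultragraph (with no sinks) and $X$ its ultragraph shift space with metric $d$, and suppose there is a vertex $v\in G^0$ with $\#CP_{\mathcal G}(v)\ge2$. Then $(X,\sigma)$ is distributionally chaotic of type 1. Moreover, $X$ contains an uncountable, perfect, compact subset which is a DC1 set, and $X$ also contains an uncountable DC1 set which is not closed and whose closure is not a DC1 set.
   Context: An ultragraph $\mathcal G=(G^0,\mathcal G^1,r,s)$ consists of countable sets $G^0$ (vertices) and $\mathcal G^1$ (edges), a map $s:\mathcal G^1\to G^0$ and a map $r:\mathcal G^1\to P(G^0)\setminus\{\emptyset\}$. Standing assumption: $\mathcal G$ has no sinks, i.e. $s^{-1}(v)\neq\emptyset$ for every $v\in G^0$. $\mathcal G^0$ is the smallest subset of $P(G^0)$ containing $\{v\}$ for all $v\in G^0$ and $r(e)$ for all $e\in\mathcal G^1$, and closed under finite unions and nonempty finite intersections. A finite path is either an element of $\mathcal G^0$ (length $0$) or a sequence of edges $e_1\dots e_k$ with $s(e_{i+1})\in r(e_i)$ (length $k$); an infinite path is a sequence $e_1e_2\dots$ of edges with $s(e_{i+1})\in r(e_i)$ for all $i$, and $\mathfrak p^\infty$ is the set of infinite paths. The set of ultrapaths $\mathfrak p$ consists of all $A\in\mathcal G^0$ (length $0$) and all pairs $(\alpha,A)$ with $\alpha=e_1\dots e_k$ a finite path, $k\ge1$, $A\in\mathcal G^0$, $A\subseteq r(e_k)$ (length $k$). A set $A\in\mathcal G^0$ is an infinite emitter if $\{e\in\mathcal G^1:s(e)\in A\}$ is infinite, and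 a minimal infinite emitter if moreover no proper subset of $A$ belonging to $\mathcal G^0$ is an infinite emitter. The ultragraph shift space is $X=\mathfrak p^\infty\cup X_{fin}$, where $X_{fin}$ consists of all $(\alpha,A)\in\mathfrak p$ with $|\alpha|\ge1$ and $A$ a minimal infinite emitter contained in $r(\alpha)$, together with all minimal infinite emitters $A\in\mathcal G^0$. An ultrapath $p$ is an initial segment of $x\in X$ when: if $p=A\in\mathcal G^0$, then either $x$ has length $\ge1$ and its first edge has source in $A$, or $x=B\in\mathcal G^0$ with $B\subseteq A$; if $p=(\alpha,A)$ with $|\alpha|\ge1$, then the first $|\alpha|$ edges of $x$ form $\alpha$ and either $x$ has length $>|\alpha|$ and its $(|\alpha|+1)$-th edge has source in $A$, or $x=(\alpha,B)$ with $B\subseteq A$. Fix an enumeration $\mathfrak p=\{p_1,p_2,\dots\}$; the metric on $X$ is $d(x,x)=0$ and, for $x\neq y$, $d(x,y)=2^{-i}$ where $i$ is the least index such that $p_i$ is an initial segment of exactly one of $x,y$. The shift map $\sigma:X\to X$ is $\sigma(\gamma_1\gamma_2\dots)=\gamma_2\gamma_3\dots$, $\sigma((\gamma_1\dots\gamma_n,A))=(\gamma_2\dots\gamma_n,A)$ if $n>1$, $\sigma((\gamma_1,A))=A$, $\sigma(A)=A$. For $\delta>0$, $n\ge1$ and $x,y\in X$, the distribution function is $\Phi(n,\delta,x,y)=\frac{\#\{0\le k\le n: d(\sigma^k(x),\sigma^k(y))<\delta\}}{n}$. A pair $(x,y)$ is a DC1 pair if $\limsup_n\Phi(n,\delta,x,y)=1$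 for all $\delta>0$ and $\liminf_n\Phi(n,\delta_0,x,y)=0$ for some $\delta_0>0$. A set $S\subseteq X$ is a DC1 set if every pair of distinct elements of $S$ is a DC1 pair; $(X,\sigma)$ is distributionally chaotic of type 1 if $X$ contains an uncountable DC1 set. A closed path based at the vertex $v$ is a finite path $e_1e_2\dots e_k$ ($k\ge1$) with $v=s(e_1)\in r(e_k)$ and $s(e_i)\neq v$ for all $1<i\le k$; $CP_{\mathcal G}(v)$ denotes the set of closed paths based at $v$. *)

(* Defs.v *)
From Stdlib Require Import Reals List Arith ClassicalEpsilon.
Import ListNotations.
Open Scope R_scope.
Set Implicit Arguments.

Definition countable (T : Type) : Prop :=
  exists f : T -> nat, forall a b, f a = f b -> a = b.

(** Ultrapaths (α, A): α a list of edges (empty list = length-0 ultrapath A). *)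
Record upath (V E : Type) := UP { up_edges : list E; up_set : V -> Prop }.

(** Points of the shift space: infinite paths, or finite (α, A) (α possibly empty). *)
Inductive point (V E : Type) :=
| IP (f : nat -> E)
| FP (l : list E) (A : V -> Prop).
Arguments IP {V E} f.
Arguments FP {V E} l A.

Definition limsup_is (u : nat -> R) (l : R) : Prop :=
  (forall eps, eps > 0 -> forall N : nat, exists n, (n >= N)%nat /\ u n > l - eps) /\
  (forall eps, eps > 0 -> exists N : nat, forall n, (n >= N)%nat -> u n < l + eps).

Definition liminf_is (u : nat -> R) (l : R) : Prop :=
  (forall eps, eps > 0 -> forall N : nat, exists n, (n >= N)%nat /\ u n < l + eps) /\
  (forall eps, eps > 0 -> exists N : nat, forall n, (n >= N)%nat -> u n > l - eps).

Section Ultragraph.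
Variables (V E : Type) (s : E -> V) (r : E -> V -> Prop).

(** The algebra 𝒢^0 (sets of vertices as predicates; closure under
    extensional equality, finite unions (incl. the empty union) and
    nonempty finite intersections). *)
Inductive InG0 : (V -> Prop) -> Prop :=
| G0_single (v : V) : InG0 (fun x => x = v)
| G0_range (e : E) : InG0 (r e)
| G0_empty : InG0 (fun _ => False)
| G0_union A B : InG0 A -> InG0 B -> InG0 (fun x => A x \/ B x)
| G0_inter A B : InG0 A -> InG0 B -> InG0 (fun x => A x /\ B x)
| G0_ext A B : InG0 A -> (forall x, A x <-> B x) -> InG0 B.

Fixpoint path_ok (l : list E) : Prop :=
  match l with
  | e :: ((e' :: _) as t) => r e (s e') /\ path_ok t
  | _ => True
  end.

Definition IsFinPath (l : list E) : Prop := l <> [] /\ path_ok l.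

Fixpoint lastE (l : list E) : option E :=
  match l with
  | [] => None
  | [e] => Some e
  | _ :: t => lastE t
  end.

(** A ⊆ r(α) where r(α) = r(last edge of α) *)
Definition sub_r_last (l : list E) (A : V -> Prop) : Prop :=
  match lastE l with
  | Some e => forall x, A x -> r e x
  | None => True
  end.

Definition IsInfPath (f : nat -> E) : Prop := forall i, r (f i) (s (f (S i))).

Definition IsUltrapath (q : upath V E) : Prop :=
  InG0 (up_set q) /\
  (up_edges q = [] \/ (IsFinPath (up_edges q) /\ sub_r_last (up_edges q) (up_set q))).

Definition inf_emitter (A : V -> Prop) : Prop :=
  InG0 A /\ ~ (exists l : list E, forall e, A (s e) -> In e l).

Definition min_inf_emitter (A : V -> Prop) : Prop :=
  inf_emitter A /\
  forall B, InG0 B -> (forall x, B x -> A x) -> (exists x, A x /\ ~ B x) ->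
    ~ inf_emitter B.

Definition InX (x : point V E) : Prop :=
  match x with
  | IP f => IsInfPath f
  | FP l A => min_inf_emitter A /\
              (l = [] \/ (IsFinPath l /\ sub_r_last l A))
  end.

Definition init_seg (q : upath V E) (x : point V E) : Prop :=
  let a := up_edges q in
  let A := up_set q in
  match x with
  | IP f => (forall i, (i < length a)%nat -> nth_error a i = Some (f i)) /\
            A (s (f (length a)))
  | FP l B => exists t, l = a ++ t /\
              ((exists e t', t = e :: t' /\ A (s e)) \/
               (t = [] /\ forall z, B z -> A z))
  end.

Definition distinguishes (q : upath V E) (x y : point V E) : Prop :=
  (init_seg q x /\ ~ init_seg q y) \/ (~ init_seg q x /\ init_seg q y).

(** enumeration p_1, p_2, ... of the ultrapaths; p n is p_{n+1} *)
Definition enumeration (p : nat -> upath V E) : Prop :=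
  (forall n, IsUltrapath (p n)) /\
  (forall q, IsUltrapath q -> exists n, p n = q) /\
  (forall m n, p m = p n -> m = n).

Variable p : nat -> upath V E.

(** the metric: d(x,x)=0, d(x,y) = 2^{-i} for the least (1-based) index i
    with p_i an initial segment of exactly one of x, y *)
Definition d (x y : point V E) : R :=
  epsilon (inhabits 0%R) (fun t =>
    (x = y /\ t = 0) \/
    (x <> y /\ exists n, distinguishes (p n) x y /\
        (forall m, (m < n)%nat -> ~ distinguishes (p m) x y) /\
        t = (/2) ^ (S n))).

Definition sigma (x : point V E) : point V E :=
  match x with
  | IP f => IP (fun i => f (S i))
  | FP (_ :: l) A => FP l A
  | FP [] A => FP [] A
  end.

Fixpoint count_close (δ : R) (x y : point V E) (m : nat) : nat :=
  match m with
  | O => O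
  | S m' => (count_close δ x y m' +
             (if Rlt_dec (d (Nat.iter m' sigma x) (Nat.iter m' sigma y)) δ
              then 1 else 0))%nat
  end.

Definition Phi (n : nat) (δ : R) (x y : point V E) : R :=
  INR (count_close δ x y (S n)) / INR n.

Definition DC1_pair (x y : point V E) : Prop :=
  (forall δ, δ > 0 -> limsup_is (fun n => Phi n δ x y) 1) /\
  (exists δ0, δ0 > 0 /\ liminf_is (fun n => Phi n δ0 x y) 0).

Definition DC1_set (S : point V E -> Prop) : Prop :=
  (forall x, S x -> InX x) /\
  (forall x y, S x -> S y -> x <> y -> DC1_pair x y).

Definition uncountable (S : point V E -> Prop) : Prop :=
  ~ exists f : point V E -> nat, forall x y, S x -> S y -> f x = f y -> x = y.

Definition distrib_chaotic_1 : Prop :=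
  exists S, DC1_set S /\ uncountable S.

Definition closure_X (S : point V E -> Prop) (x : point V E) : Prop :=
  InX x /\ forall eps, eps > 0 -> exists y, S y /\ d x y < eps.

Definition closed_X (S : point V E -> Prop) : Prop :=
  (forall x, S x -> InX x) /\ (forall x, closure_X S x -> S x).

Definition perfect_X (S : point V E -> Prop) : Prop :=
  closed_X S /\
  forall x, S x -> forall eps, eps > 0 -> exists y, S y /\ y <> x /\ d x y < eps.

Definition open_in_X (U : point V E -> Prop) : Prop :=
  forall x, InX x -> U x -> exists eps, eps > 0 /\
    forall y, InX y -> d x y < eps -> U y.

Definition compact_X (S : point V E -> Prop) : Prop :=
  (forall x, S x -> InX x) /\
  forall (I : Type) (U : I -> point V E -> Prop),
    (forall i, open_in_X (U i)) -> (forall x, S x -> exists i, U i x) ->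
    exists l : list I, forall x, S x -> exists i, In i l /\ U i x.

End Ultragraph.

Definition closed_path (V E : Type) (s : E -> V) (r : E -> V -> Prop)
    (v : V) (l : list E) : Prop :=
  IsFinPath s r l /\
  (exists e1 t, l = e1 :: t /\ s e1 = v) /\
  (exists ek, lastE l = Some ek /\ r ek v) /\
  (forall i e, (0 < i)%nat -> nth_error l i = Some e -> s e <> v).

(* Main.v *)
Require Import Defs.
From Stdlib Require Import Reals Lra List Lia Arith ClassicalEpsilon Classical FunctionalExtensionality.
Import ListNotations.
Set Warnings "-deprecated".

Local Open Scope R_scope.

Lemma half_pow_le (m n : nat) : (m <= n)%nat -> (/2)^n <= (/2)^m.
Proof.
  induction 1. lra.
  simpl. assert (0 <= (/2)^m0) by (apply pow_le; lra). lra.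
Qed.

Lemma half_pow_pos (n : nat) : 0 < (/2)^n.
Proof. apply pow_lt; lra. Qed.

Lemma min_ex (Q : nat -> Prop) n : Q n -> exists m, Q m /\ forall k, (k < m)%nat -> ~ Q k.
Proof.
  revert Q. induction n as [n IH] using lt_wf_ind. intros Q Hn.
  destruct (classic (exists k, (k < n)%nat /\ Q k)) as [[k [Hk Qk]]|Hno].
  - exact (IH k Hk Q Qk).
  - exists n. split; auto. intros k Hk Qk. apply Hno; eauto.
Qed.

Definition pre {E} (f : nat -> E) (n : nat) : list E := map f (seq 0 n).

Lemma pre_length {E} (f : nat -> E) n : length (pre f n) = n.
Proof. unfold pre. rewrite length_map, length_seq. auto. Qed.

Lemma pre_nth_error {E} (f : nat -> E) n i : (i < n)%nat -> nth_error (pre f n) i = Some (f i).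
Proof.
  intros H. unfold pre. rewrite nth_error_map. rewrite nth_error_seq.
  destruct (Nat.ltb_spec i n); [|lia]. reflexivity.
Qed.

Lemma pre_S {E} (f : nat -> E) n : pre f (S n) = pre f n ++ [f n].
Proof. unfold pre. rewrite seq_S, map_app. reflexivity. Qed.

Lemma path_ok_map_seq {V E} (s : E -> V) r (f : nat -> E) a n :
  (forall i, r (f i) (s (f (S i)))) -> path_ok s r (map f (seq a n)).
Proof.
  intros Hf. revert a. induction n as [|n IH]; intros a; simpl; auto.
  destruct n; simpl; auto. split; auto. apply (IH (S a)).
Qed.

Lemma lastE_map_seq {E} (f : nat -> E) a n : lastE (map f (seq a (S n))) = Some (f (a + n)%nat).
Proof.
  revert a. induction n as [|n IH]; intros a.
  - simpl. f_equal; f_equal; lia.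
  - specialize (IH (S a)). replace (a + S n)%nat with (S a + n)%nat by lia. rewrite <- IH.
    simpl. reflexivity.
Qed.

Lemma pre_ultrapath {V E} (s : E -> V) r (f : nat -> E) j :
  IsInfPath s r f -> IsUltrapath s r (UP (pre f (S j)) (r (f j))).
Proof.
  intros Hf. split; simpl. constructor.
  right. split. split. unfold pre. simpl. discriminate.
  apply path_ok_map_seq; auto.
  unfold sub_r_last, pre. rewrite lastE_map_seq. simpl. auto.
Qed.

Lemma init_pre {V E} (s : E -> V) r (f : nat -> E) j :
  IsInfPath s r f -> init_seg s (UP (pre f (S j)) (r (f j))) (IP f).
Proof.
  intros Hf. unfold init_seg; cbn [up_edges up_set]. rewrite pre_length. split.
  - intros i Hi. apply pre_nth_error. auto.
  - apply Hf.
Qed.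

Lemma init_pre_other {V E} (s : E -> V) (f g : nat -> E) (A : V -> Prop) j :
  f j <> g j -> ~ init_seg s (UP (pre f (S j)) A) (IP g).
Proof.
  intros Hne [H1 _]. cbn [up_edges up_set] in H1. rewrite pre_length in H1.
  specialize (H1 j ltac:(lia)). rewrite pre_nth_error in H1 by lia.
  inversion H1. auto.
Qed.

Lemma init_seg_IP_agree {V E} (s : E -> V) q (f g : nat -> E) :
  (forall i, (i <= length (up_edges q))%nat -> f i = g i) ->
  init_seg s q (IP f) -> init_seg s q (IP g).
Proof.
  intros H [H1 H2]. simpl in *. split.
  - intros i Hi. rewrite H1 by auto. rewrite H by lia. auto.
  - rewrite <- H by lia. auto.
Qed.

Section Metric.
End Metric.

Definition idx {V E} (p : nat -> upath V E) (q : upath V E) : nat :=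
  epsilon (inhabits 0%nat) (fun n => p n = q).

Lemma idx_spec {V E} (s : E -> V) r p q :
  enumeration s r p -> IsUltrapath s r q -> p (idx p q) = q.
Proof.
  intros [_ [Hs _]] Hq. unfold idx. apply epsilon_spec. apply Hs; auto.
Qed.

Lemma dist_neq {V E} (s : E -> V) q x y : distinguishes s q x y -> x <> y.
Proof. intros [[H1 H2]|[H1 H2]] ->; tauto. Qed.

Lemma d_refl {V E} (s : E -> V) p x : d s p x x = 0.
Proof.
  unfold d.
  match goal with |- epsilon ?i ?P = _ => assert (H : P (epsilon i P)) end.
  { apply epsilon_spec. exists 0. left. auto. }
  destruct H as [[_ H]|[H _]]; auto. tauto.
Qed.

Lemma dist_ge {V E} (s : E -> V) p x y n :
  distinguishes s (p n) x y -> (/2)^(S n) <= d s p x y.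
Proof.
  intros Hd. pose proof (dist_neq _ _ _ _ Hd) as Hne.
  destruct (min_ex (fun k => distinguishes s (p k) x y) n Hd) as [m [Hm Hmin]].
  unfold d.
  match goal with |- _ <= epsilon ?i ?P => assert (H : P (epsilon i P)) end.
  { apply epsilon_spec. exists ((/2)^(S m)). right. split; auto. exists m. auto. }
  destruct H as [[H _]|[_ [m' [Hm' [Hmin' ->]]]]]; [tauto|].
  apply half_pow_le. destruct (le_lt_dec m' n); [lia|]. exfalso. eapply Hmin'; eauto.
Qed.

Lemma dist_lt {V E} (s : E -> V) p x y n :
  x <> y -> (exists k, distinguishes s (p k) x y) ->
  (forall m, (m <= n)%nat -> ~ distinguishes s (p m) x y) ->
  d s p x y < (/2)^(S n).
Proof.
  intros Hne [k Hk] Hno. unfold d.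
  match goal with |- epsilon ?i ?P < _ => assert (H : P (epsilon i P)) end.
  { destruct (min_ex (fun k => distinguishes s (p k) x y) k Hk) as [m [Hm Hmin]].
    apply epsilon_spec. exists ((/2)^(S m)). right. split; auto. exists m. auto. }
  destruct H as [[H _]|[_ [m' [Hm' [Hmin' ->]]]]]; [tauto|].
  destruct (le_lt_dec m' n). { exfalso. eapply Hno; eauto. }
  eapply Rle_lt_trans. apply (half_pow_le (S (S n))). lia.
  simpl. pose proof (half_pow_pos n). lra.
Qed.

Lemma IP_distinguished {V E} (s : E -> V) r p (f g : nat -> E) :
  enumeration s r p -> IsInfPath s r f -> @IP V E f <> IP g ->
  exists j, f j <> g j /\ (forall i, (i < j)%nat -> f i = g i) /\
    distinguishes s (p (idx p (UP (pre f (S j)) (r (f j))))) (IP f) (IP g).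
Proof.
  intros Hp Hf Hne.
  assert (Hex : exists j, f j <> g j).
  { apply NNPP. intros Hno. apply Hne. f_equal. apply functional_extensionality.
    intros x. apply NNPP. intros H. apply Hno. eauto. }
  destruct Hex as [j0 Hj0].
  destruct (min_ex (fun j => f j <> g j) j0 Hj0) as [j [Hj Hmin]].
  exists j. split; auto. split. { intros i Hi. apply NNPP. apply Hmin. auto. }
  rewrite (idx_spec s r) by (auto; apply pre_ultrapath; auto).
  left. split. apply init_pre; auto. apply init_pre_other; auto.
Qed.

Lemma agree_of_close {V E} (s : E -> V) r p (f : nat -> E) :
  enumeration s r p -> IsInfPath s r f ->
  forall M, exists eps, eps > 0 /\ forall g, d s p (IP f) (IP g) < eps ->
     forall i, (i < M)%nat -> f i = g i.
Proof.
  intros Hp Hf M. induction M as [|M [eps [He IH]]].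
  - exists 1. split. lra. intros; lia.
  - set (n := idx p (UP (pre f (S M)) (r (f M)))).
    exists (Rmin eps ((/2)^(S n))). split.
    { apply Rmin_glb_lt; auto. apply half_pow_pos. }
    intros g Hd i Hi.
    destruct (Nat.eq_dec i M) as [->|].
    + apply NNPP. intros Hne.
      assert (Hdis : distinguishes s (p n) (IP f) (IP g)).
      { unfold n. rewrite (idx_spec s r) by (auto; apply pre_ultrapath; auto).
        left. split. apply init_pre; auto. apply init_pre_other; auto. }
      apply dist_ge in Hdis. pose proof (Rmin_r eps ((/2)^(S n))). lra.
    + apply IH; [|lia]. pose proof (Rmin_l eps ((/2)^(S n))). lra.
Qed.

Fixpoint maxupto (h : nat -> nat) (n : nat) : nat :=
  match n with O => h O | S n' => Nat.max (maxupto h n') (h n) end.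

Lemma maxupto_ge h n m : (m <= n)%nat -> (h m <= maxupto h n)%nat.
Proof. induction n; intros Hm; simpl. replace m with 0%nat by lia; lia.
  destruct (Nat.eq_dec m (S n)) as [->|]; [lia|]. specialize (IHn ltac:(lia)). lia. Qed.

Lemma close_of_agree {V E} (s : E -> V) r p :
  enumeration s r p ->
  forall eps, eps > 0 -> exists M, forall f g, IsInfPath s r f ->
     (forall i, (i < M)%nat -> f i = g i) -> d s p (IP f) (IP g) < eps.
Proof.
  intros Hp eps He.
  destruct (pow_lt_1_zero (/2) ltac:(rewrite Rabs_pos_eq; lra) eps He) as [n0 Hn0].
  exists (S (maxupto (fun m => length (up_edges (p m))) n0)).
  intros f g Hf Hag.
  destruct (classic (@IP V E f = IP g)) as [Heq|Hne].
  { rewrite Heq, d_refl. lra. }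
  eapply Rlt_trans. apply (dist_lt _ _ _ _ n0).
  - exact Hne.
  - destruct (IP_distinguished s r p f g Hp Hf Hne) as [j [_ [_ H]]]. eauto.
  - intros m Hm [[H1 H2]|[H1 H2]].
    + apply H2. apply (init_seg_IP_agree s (p m) f g); [|exact H1]. intros i Hi. apply Hag.
      pose proof (maxupto_ge (fun m => length (up_edges (p m))) n0 m Hm). simpl in *. lia.
    + apply H1. apply (init_seg_IP_agree s (p m) g f); [|exact H2]. intros i Hi. symmetry. apply Hag.
      pose proof (maxupto_ge (fun m => length (up_edges (p m))) n0 m Hm). simpl in *. lia.
  - pose proof (Hn0 (S n0) ltac:(lia)) as H. rewrite Rabs_pos_eq in H; [exact H|]. left; apply half_pow_pos.
Qed.

Fixpoint wordsN {E} (F : list E) (n : nat) : list (list E) :=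
  match n with
  | O => [[]]
  | S n' => flat_map (fun w => map (fun e => w ++ [e]) F) (wordsN F n')
  end.

Lemma pre_in_words {E} (F : list E) (f : nat -> E) n :
  (forall i, (i < n)%nat -> In (f i) F) -> In (pre f n) (wordsN F n).
Proof.
  induction n as [|n IH]; intros H. simpl. auto.
  rewrite pre_S. simpl. apply in_flat_map. exists (pre f n). split.
  apply IH; intros; apply H; lia. apply (in_map (fun e => pre f n ++ [e])). apply H; lia.
Qed.

Lemma in_le_list_max l a : In a l -> (a <= list_max l)%nat.
Proof.
  intros H. assert (HF := proj1 (list_max_le l (list_max l)) (le_n _)).
  rewrite Forall_forall in HF. auto.
Qed.

Lemma far_bound {V E} (s : E -> V) r p (F : list E) (e0 : E) K :
  enumeration s r p ->
  exists d0, d0 > 0 /\ forall f g, IsInfPath s r f ->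
    (forall i, (i < K)%nat -> In (f i) F) ->
    (exists j, (j < K)%nat /\ f j <> g j) -> d0 <= d s p (IP f) (IP g).
Proof.
  intros Hp.
  set (h := fun n => list_max (map (fun w => idx p (UP w (r (last w e0)))) (wordsN F (S n)))).
  exists ((/2)^(S (maxupto h K))). split. apply half_pow_pos.
  intros f g Hf HF [j [Hj Hne]].
  set (q := UP (pre f (S j)) (r (f j))).
  assert (Hdis : distinguishes s (p (idx p q)) (IP f) (IP g)).
  { rewrite (idx_spec s r) by (auto; apply pre_ultrapath; auto).
    left. split. apply init_pre; auto. apply init_pre_other; auto. }
  eapply Rle_trans; [|apply (dist_ge _ _ _ _ _ Hdis)].
  apply half_pow_le. apply le_n_S.
  eapply Nat.le_trans; [|apply (maxupto_ge h K j); lia].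
  unfold h. apply in_le_list_max. apply in_map_iff. exists (pre f (S j)). split.
  - unfold q. f_equal. rewrite pre_S, last_last. reflexivity.
  - apply pre_in_words. intros i Hi. apply HF. lia.
Qed.

Lemma pre_of_agree {E} (l : list E) (g : nat -> E) :
  (forall i, (i < length l)%nat -> nth_error l i = Some (g i)) -> l = pre g (length l).
Proof.
  intros H. apply nth_error_ext. intros i.
  destruct (le_lt_dec (length l) i).
  - rewrite (proj2 (nth_error_None l i)) by auto.
    rewrite (proj2 (nth_error_None _ i)); auto. rewrite pre_length. auto.
  - rewrite H by auto. rewrite pre_nth_error; auto.
Qed.

Lemma FP_far {V E} (s : E -> V) r p (F : list E) l A :
  enumeration s r p -> InX s r (FP l A) ->
  exists d0, d0 > 0 /\ forall g, IsInfPath s r g -> In (g (length l)) F ->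
    d0 <= d s p (FP l A) (IP g).
Proof.
  intros Hp HX.
  set (n0 := idx p (UP l A)).
  set (n1 := list_max (map (fun e => idx p (UP (l ++ [e]) (r e))) F)).
  exists ((/2)^(S (Nat.max n0 n1))). split. apply half_pow_pos.
  intros g Hg HgF.
  destruct (classic (forall i, (i < length l)%nat -> nth_error l i = Some (g i))) as [Hag|Hnag].
  - pose proof (pre_of_agree l g Hag) as Hl.
    set (q := UP (pre g (S (length l))) (r (g (length l)))).
    assert (Hdis : distinguishes s (p (idx p q)) (FP l A) (IP g)).
    { rewrite (idx_spec s r) by (auto; apply pre_ultrapath; auto).
      right. split.
      - intros [t [Ht _]]. cbn [up_edges] in Ht. apply (f_equal (@length E)) in Ht.
        unfold q in Ht; cbn [up_edges] in Ht. rewrite !length_app, pre_length in Ht. simpl in Ht. lia.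
      - apply init_pre; auto. }
    eapply Rle_trans; [|apply (dist_ge _ _ _ _ _ Hdis)].
    apply half_pow_le. apply le_n_S.
    eapply Nat.le_trans; [|apply Nat.le_max_r].
    unfold n1. apply in_le_list_max. apply in_map_iff. exists (g (length l)). split; auto.
    unfold q. rewrite pre_S, <- Hl. reflexivity.
  - assert (Hq : IsUltrapath s r (UP l A)).
    { destruct HX as [[[HA _] _] Hl]. split; auto. }
    assert (Hdis : distinguishes s (p n0) (FP l A) (IP g)).
    { unfold n0. rewrite (idx_spec s r) by auto.
      left. split.
      - exists []. rewrite app_nil_r. split; auto.
      - intros [H _]. apply Hnag. exact H. }
    eapply Rle_trans; [|apply (dist_ge _ _ _ _ _ Hdis)].
    apply half_pow_le. lia.
Qed.

Local Close Scope R_scope.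
Local Open Scope R_scope.

Definition Dk {V E} (s : E -> V) p (x y : point V E) k :=
  d s p (Nat.iter k (Defs.sigma (E:=E)) x) (Nat.iter k (Defs.sigma (E:=E)) y).

Lemma cc_le {V E} (s : E -> V) p δ x y m : (count_close s p δ x y m <= m)%nat.
Proof. induction m; cbn [count_close]; auto. destruct Rlt_dec; lia. Qed.

Lemma cc_lo {V E} (s : E -> V) p δ x y a m :
  (forall k, (a <= k)%nat -> (k < m)%nat -> Dk s p x y k < δ) ->
  (m - a <= count_close s p δ x y m)%nat.
Proof.
  induction m; intros H; cbn [count_close]. lia.
  specialize (IHm ltac:(intros; apply H; lia)).
  destruct (le_lt_dec (S m) a) as [Hl|Hl]. destruct Rlt_dec; lia.
  destruct Rlt_dec as [|n]. lia. exfalso. apply n. apply (H m); lia.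
Qed.

Lemma cc_hi {V E} (s : E -> V) p δ x y a m :
  (forall k, (a <= k)%nat -> (k < m)%nat -> ~ Dk s p x y k < δ) ->
  (count_close s p δ x y m <= a)%nat.
Proof.
  induction m; intros H; cbn [count_close]. lia.
  destruct (le_lt_dec (S m) a). pose proof (cc_le s p δ x y m). destruct Rlt_dec; lia.
  specialize (IHm ltac:(intros; apply H; lia)).
  destruct Rlt_dec as [r|]. exfalso. apply (H m); auto; lia. lia.
Qed.

Lemma div_lt_aux a b z : 0 < b -> a < z * b -> a / b < z.
Proof.
  intros Hb H. apply (Rmult_lt_reg_r b); auto. unfold Rdiv.
  rewrite Rmult_assoc, Rinv_l by lra. lra.
Qed.

Lemma div_gt_aux a b z : 0 < b -> z * b < a -> z < a / b.
Proof.
  intros Hb H. apply (Rmult_lt_reg_r b); auto. unfold Rdiv.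
  rewrite Rmult_assoc, Rinv_l by lra. lra.
Qed.

Lemma DC1_abs {V E} (s : E -> V) p x y :
  (forall δ, δ > 0 -> exists M, forall K N, exists a b, (N <= a)%nat /\ (1 <= a)%nat /\
     (K * a <= b)%nat /\ forall k, (a <= k)%nat -> (k + M < b)%nat -> Dk s p x y k < δ) ->
  (exists δ0, δ0 > 0 /\ forall K N, exists a b, (N <= a)%nat /\ (1 <= a)%nat /\
     (K * a <= b)%nat /\ forall k, (a <= k)%nat -> (k < b)%nat -> ~ Dk s p x y k < δ0) ->
  DC1_pair s p x y.
Proof.
  intros Hc [δ0 [Hδ0 Hf]]. split.
  - intros δ Hδ. destruct (Hc δ Hδ) as [M HM]. split.
    + intros eps He N.
      destruct (INR_archimed eps 1 He) as [K0 HK0].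
      destruct (HM (K0 + M + 1)%nat N) as [a [b [HNa [Ha1 [Hab Hcl]]]]].
      assert (HK0pos : (1 <= K0)%nat).
      { destruct K0. simpl in HK0. lra. lia. }
      set (n := (b - M - 1)%nat).
      assert (H1 : (K0 * a + (M + 1) * a <= b)%nat) by (rewrite <- Nat.mul_add_distr_r; replace (K0 + (M+1))%nat with (K0 + M + 1)%nat by lia; auto).
      assert (H2 : (M + 1 <= (M + 1) * a)%nat) by (rewrite <- (Nat.mul_1_r (M+1)) at 1; apply Nat.mul_le_mono_l; auto).
      assert (H3 : (a <= K0 * a)%nat) by (rewrite <- (Nat.mul_1_l a) at 1; apply Nat.mul_le_mono_r; auto).
      assert (Hn : (K0 * a <= n)%nat) by (unfold n; lia).
      exists n. split. lia.
      pose proof (cc_lo s p δ x y a (S n) ltac:(intros k Hk1 Hk2; apply Hcl; unfold n in *; lia)) as Hc1.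
      unfold Phi. apply div_gt_aux. apply lt_0_INR. nia.
      apply le_INR in Hc1. rewrite minus_INR in Hc1 by lia.
      apply le_INR in Hn. rewrite mult_INR in Hn. rewrite S_INR in Hc1.
      assert (Ha : 1 <= INR a) by (apply (le_INR 1); auto).
      assert (INR a < eps * INR n) by nra. nra.
    + intros eps He.
      destruct (INR_archimed eps 1 He) as [K0 HK0].
      exists (S K0). intros n Hn. unfold Phi. apply div_lt_aux. apply lt_0_INR. lia.
      pose proof (cc_le s p δ x y (S n)) as H. apply le_INR in H. rewrite S_INR in H.
      apply le_INR in Hn. rewrite S_INR in Hn. pose proof (pos_INR K0). nra.
  - exists δ0. split; auto. split.
    + intros eps He N.
      destruct (INR_archimed eps 1 He) as [K0 HK0].
      destruct (Hf (K0 + 1)%nat N) as [a [b [HNa [Ha1 [Hab Hfar]]]]].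
      assert (HK0pos : (1 <= K0)%nat).
      { destruct K0. simpl in HK0. lra. lia. }
      set (n := (b - 1)%nat).
      assert (H1 : (K0 * a + a <= b)%nat) by (replace (K0 * a + a)%nat with ((K0 + 1) * a)%nat by ring; auto).
      assert (H3 : (a <= K0 * a)%nat) by (rewrite <- (Nat.mul_1_l a) at 1; apply Nat.mul_le_mono_r; auto).
      assert (Hn : (K0 * a <= n)%nat) by (unfold n; lia).
      exists n. split. lia.
      pose proof (cc_hi s p δ0 x y a (S n) ltac:(intros k Hk1 Hk2; apply Hfar; unfold n in *; lia)) as Hc1.
      unfold Phi. apply div_lt_aux. apply lt_0_INR. nia.
      apply le_INR in Hc1. apply le_INR in Hn. rewrite mult_INR in Hn.
      assert (Ha : 1 <= INR a) by (apply (le_INR 1); auto).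
      nra.
    + intros eps He. exists 1%nat. intros n Hn. unfold Phi.
      assert (0 < INR n) by (apply lt_0_INR; lia).
      assert (0 <= INR (count_close s p δ0 x y (S n)) / INR n).
      { unfold Rdiv. apply Rmult_le_pos. apply pos_INR. left. apply Rinv_0_lt_compat. auto. }
      lra.
Qed.

Local Close Scope R_scope.

Record Good {V E} (s : E -> V) (r : E -> V -> Prop) (v : V) (L : nat) (A B : list E) (e0 : E) (q : nat) : Prop := {
  g_L : (1 <= L)%nat;
  g_lA : length A = L;
  g_lB : length B = L;
  g_pA : forall i, (S i < L)%nat -> r (nth i A e0) (s (nth (S i) A e0));
  g_pB : forall i, (S i < L)%nat -> r (nth i B e0) (s (nth (S i) B e0));
  g_sA : s (nth 0 A e0) = v;
  g_sB : s (nth 0 B e0) = v;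
  g_rA : r (nth (L - 1) A e0) v;
  g_rB : r (nth (L - 1) B e0) v;
  g_q : (q < L)%nat;
  g_qd : nth q A e0 <> nth q B e0 }.

Definition blk {E} (A B : list E) (b : bool) := if b then A else B.
Definition pf {E} (L : nat) (A B : list E) (e0 : E) (c : nat -> bool) (i : nat) : E :=
  nth (i mod L)%nat (blk A B (c (i / L)%nat)) e0.

Lemma divmod_char (L j t : nat) : (t < L)%nat -> (j * L + t) / L = j /\ (j * L + t) mod L = t.
Proof.
  intros Ht. split.
  - symmetry. apply (Nat.div_unique _ _ _ t); auto. lia.
  - symmetry. apply (Nat.mod_unique _ _ j t); auto. lia.
Qed.

Lemma pf_blk {E} L (A B : list E) e0 c j t : (t < L)%nat ->
  pf L A B e0 c (j * L + t) = nth t (blk A B (c j)) e0.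
Proof. intros Ht. unfold pf. destruct (divmod_char L j t Ht) as [-> ->]. auto. Qed.

Lemma decomp (L i : nat) : (1 <= L)%nat -> i = (i / L) * L + i mod L /\ (i mod L < L)%nat.
Proof.
  intros HL. split. pose proof (Nat.div_mod i L ltac:(lia)). lia.
  apply Nat.mod_upper_bound. lia.
Qed.

Lemma iter_sigma_IP {V E} (f : nat -> E) k :
  Nat.iter k (Defs.sigma (V:=V) (E:=E)) (IP f) = IP (fun i => f (k + i)%nat).
Proof.
  induction k. simpl. reflexivity.
  simpl Nat.iter. rewrite IHk. simpl. f_equal. apply functional_extensionality. intros i. f_equal. lia.
Qed.

Lemma shift_path {V E} (s : E -> V) r (f : nat -> E) k :
  IsInfPath s r f -> IsInfPath s r (fun i => f (k + i)%nat).
Proof. intros H i. replace (k + S i)%nat with (S (k + i)) by lia. apply H. Qed.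

Lemma blk_len {V E} s r v L (A B : list E) e0 q b : Good (V:=V) s r v L A B e0 q -> length (blk A B b) = L.
Proof. intros G. destruct b; simpl; [apply (g_lA _ _ _ _ _ _ _ _ G)|apply (g_lB _ _ _ _ _ _ _ _ G)]. Qed.

Lemma pf_path {V E} s r v L (A B : list E) e0 q c :
  Good (V:=V) s r v L A B e0 q -> IsInfPath s r (pf L A B e0 c).
Proof.
  intros G i. pose proof (g_L _ _ _ _ _ _ _ _ G) as HL.
  destruct (decomp L i HL) as [Hi Ht].
  set (j := (i / L)%nat) in *. set (t := (i mod L)%nat) in *.
  rewrite Hi. rewrite pf_blk by auto.
  destruct (le_lt_dec L (S t)).
  - assert (t = L - 1)%nat by lia.
    replace (S (j * L + t)) with (S j * L + 0)%nat by (simpl; lia).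
    rewrite pf_blk by lia. rewrite H.
    destruct (c j); destruct (c (S j)); cbn [blk];
      try rewrite (g_sA _ _ _ _ _ _ _ _ G); try rewrite (g_sB _ _ _ _ _ _ _ _ G);
      first [apply (g_rA _ _ _ _ _ _ _ _ G) | apply (g_rB _ _ _ _ _ _ _ _ G)].
  - replace (S (j * L + t)) with (j * L + S t)%nat by lia. rewrite pf_blk by auto.
    destruct (c j); simpl; [apply (g_pA _ _ _ _ _ _ _ _ G)|apply (g_pB _ _ _ _ _ _ _ _ G)]; auto.
Qed.

Lemma pf_inF {V E} s r v L (A B : list E) e0 q c i :
  Good (V:=V) s r v L A B e0 q -> In (pf L A B e0 c i) (A ++ B).
Proof.
  intros G. pose proof (g_L _ _ _ _ _ _ _ _ G) as HL. unfold pf. apply in_or_app.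
  destruct (c (i / L)); simpl; [left|right]; apply nth_In;
    [rewrite (g_lA _ _ _ _ _ _ _ _ G)|rewrite (g_lB _ _ _ _ _ _ _ _ G)]; apply Nat.mod_upper_bound; lia.
Qed.

Lemma pf_block_eq {V E} s r v L (A B : list E) e0 q c1 c2 j :
  Good (V:=V) s r v L A B e0 q ->
  pf L A B e0 c1 (j * L + q) = pf L A B e0 c2 (j * L + q) -> c1 j = c2 j.
Proof.
  intros G H. pose proof (g_q _ _ _ _ _ _ _ _ G). rewrite !pf_blk in H by auto.
  pose proof (g_qd _ _ _ _ _ _ _ _ G).
  destruct (c1 j), (c2 j); simpl in H; auto; congruence.
Qed.

Lemma close_blocks L (E : Type) (A B : list E) e0 c1 c2 a b k M :
  (1 <= L)%nat ->
  (forall j, (a <= j)%nat -> (j < b)%nat -> c1 j = c2 j) ->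
  (a * L <= k)%nat -> (k + M < b * L)%nat ->
  forall i, (i < M)%nat -> pf L A B e0 c1 (k + i) = pf L A B e0 c2 (k + i).
Proof.
  intros HL H Hk HkM i Hi. unfold pf. rewrite H. reflexivity.
  apply Nat.div_le_lower_bound. lia. lia.
  apply Nat.div_lt_upper_bound. lia. lia.
Qed.

Lemma far_blocks {V E} s r v L (A B : list E) e0 q c1 c2 k :
  Good (V:=V) s r v L A B e0 q ->
  c1 (k / L + 1)%nat <> c2 (k / L + 1)%nat ->
  exists j, (j < 2 * L)%nat /\ pf L A B e0 c1 (k + j) <> pf L A B e0 c2 (k + j).
Proof.
  intros G Hne. pose proof (g_L _ _ _ _ _ _ _ _ G) as HL. pose proof (g_q _ _ _ _ _ _ _ _ G).
  destruct (decomp L k HL) as [Hk Ht].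
  exists ((k / L + 1) * L + q - k)%nat. split. nia.
  replace (k + ((k / L + 1) * L + q - k))%nat with ((k / L + 1) * L + q)%nat by nia.
  intros Heq. apply Hne. eapply pf_block_eq; eauto.
Qed.

Local Close Scope R_scope.

Lemma DC1_blocks {V E} s r (p : nat -> upath V E) v L (A B : list E) e0 q c1 c2 :
  enumeration s r p -> Good s r v L A B e0 q ->
  (forall K N, exists a b, N <= a /\ 1 <= a /\ K * a <= b /\
      forall j, a <= j -> j < b -> c1 j = c2 j) ->
  (forall K N, exists a b, N <= a /\ 1 <= a /\ K * a <= b /\
      forall j, a <= j -> j < b -> c1 j <> c2 j) ->
  DC1_pair s p (IP (pf L A B e0 c1)) (IP (pf L A B e0 c2)).
Proof.
  intros Hp G Hag Hdis. pose proof (g_L _ _ _ _ _ _ _ _ G) as HL.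
  apply DC1_abs.
  - intros δ Hδ. destruct (close_of_agree s r p Hp δ Hδ) as [M HM].
    exists M. intros K N. destruct (Hag K N) as [a [b [HNa [Ha1 [Hab Hw]]]]].
    exists (a * L), (b * L). split; [nia|]. split; [nia|]. split; [nia|].
    intros k Hk1 Hk2. unfold Dk. rewrite !iter_sigma_IP. apply HM.
    + apply shift_path. eapply pf_path; eauto.
    + intros i Hi. eapply close_blocks; eauto.
  - destruct (far_bound s r p (A ++ B) e0 (2 * L) Hp) as [d0 [Hd0 Hfar]].
    exists d0. split; auto. intros K N.
    destruct (Hdis (S K) N) as [a [b [HNa [Ha1 [Hab Hw]]]]].
    exists (a * L), ((b - 1) * L). split; [nia|]. split; [nia|]. split; [nia|].
    intros k Hk1 Hk2. unfold Dk. rewrite !iter_sigma_IP. apply Rle_not_lt. apply Hfar.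
    + apply shift_path. eapply pf_path; eauto.
    + intros i _. eapply pf_inF; eauto.
    + apply (far_blocks s r v L A B e0 q c1 c2 k G). apply Hw.
      * assert (a <= k / L); [|lia]. apply Nat.div_le_lower_bound; lia.
      * assert (k / L < b - 1); [|lia]. apply Nat.div_lt_upper_bound; lia.
Qed.

Local Close Scope R_scope.

Definition T (n : nat) : nat := 2 ^ (2 ^ n).
Definition stg (j : nat) : nat := Nat.log2 (Nat.log2 j).
Definition rd (m : nat) : nat := m - 2 ^ (Nat.log2 m).
Definition code (w : nat -> bool) (j : nat) : bool :=
  if Nat.even (stg j) then true else w (rd (Nat.div2 (stg j))).

Lemma T_gt n : n < T n.
Proof. unfold T. pose proof (Nat.pow_gt_lin_r 2 n ltac:(lia)). pose proof (Nat.pow_gt_lin_r 2 (2^n) ltac:(lia)). lia. Qed.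

Lemma T_S n : T (S n) = T n * T n.
Proof. unfold T. rewrite Nat.pow_succ_r'. replace (2 * 2 ^ n) with (2 ^ n + 2 ^ n) by lia. apply Nat.pow_add_r. Qed.

Lemma stg_T n j : T n <= j < T (S n) -> stg j = n.
Proof.
  intros [H1 H2]. unfold stg, T in *.
  assert (Hl1 : 2 ^ n <= Nat.log2 j).
  { apply Nat.log2_le_mono in H1. rewrite Nat.log2_pow2 in H1 by lia. auto. }
  assert (0 < 2 ^ n) by (apply Nat.neq_0_lt_0, Nat.pow_nonzero; lia).
  assert (0 < 2 ^ 2 ^ n) by (apply Nat.neq_0_lt_0, Nat.pow_nonzero; lia).
  assert (Hl2 : Nat.log2 j < 2 ^ S n) by (apply (proj1 (Nat.log2_lt_pow2 j (2 ^ S n) ltac:(lia))); exact H2).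
  apply Nat.log2_unique. lia. auto.
Qed.

Lemma div2_odd' m : Nat.div2 (2 * m + 1) = m.
Proof. rewrite Nat.div2_div. symmetry. apply (Nat.div_unique _ _ _ 1); lia. Qed.

Lemma code_even w m j : T (2 * m) <= j < T (S (2 * m)) -> code w j = true.
Proof. intros H. unfold code. rewrite (stg_T _ _ H), Nat.even_even. auto. Qed.

Lemma code_odd w m j : T (2 * m + 1) <= j < T (S (2 * m + 1)) -> code w j = w (rd m).
Proof. intros H. unfold code. rewrite (stg_T _ _ H), Nat.even_odd, div2_odd'. auto. Qed.

Lemma rd_spec k i : i < 2 ^ k -> rd (2 ^ k + i) = i.
Proof.
  intros H. unfold rd. rewrite (Nat.log2_unique (2^k + i) k). lia. lia.
  rewrite Nat.pow_succ_r'. lia.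
Qed.

Lemma rd_le m : rd m <= m.
Proof. unfold rd. lia. Qed.

Lemma code_local w w' j : (forall i, i < j -> w i = w' i) -> code w j = code w' j.
Proof.
  intros H. destruct j as [|j]. reflexivity.
  unfold code. destruct (Nat.even (stg (S j))); auto. apply H.
  pose proof (rd_le (Nat.div2 (stg (S j)))). pose proof (Nat.le_div2_diag_l (stg (S j))).
  unfold stg in *. pose proof (Nat.log2_le_lin (Nat.log2 (S j)) ltac:(lia)).
  pose proof (Nat.log2_lt_lin (S j) ltac:(lia)). lia.
Qed.

Definition jr (i : nat) := T (2 * (2 ^ (S i) + i) + 1).
Lemma code_jr w i : code w (jr i) = w i.
Proof.
  unfold jr. rewrite (code_odd w (2 ^ (S i) + i)).
  rewrite rd_spec. auto. pose proof (Nat.pow_gt_lin_r 2 (S i) ltac:(lia)). lia.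
  split. lia. rewrite T_S. pose proof (T_gt (2 * (2 ^ S i + i) + 1)). nia.
Qed.

Lemma code_windows w1 w2 sft (c1 c2 : nat -> bool) :
  sft <= 1 -> (forall j, c1 (sft + j) = code w1 j) -> (forall j, c2 (sft + j) = code w2 j) ->
  (exists i, w1 i <> w2 i) ->
  (forall K N, exists a b, N <= a /\ 1 <= a /\ K * a <= b /\
      forall j, a <= j -> j < b -> c1 j = c2 j) /\
  (forall K N, exists a b, N <= a /\ 1 <= a /\ K * a <= b /\
      forall j, a <= j -> j < b -> c1 j <> c2 j).
Proof.
  intros Hs H1 H2 [i Hi]. split.
  - intros K N. set (n := 2 * (N + K)).
    exists (sft + T n), (sft + T (S n)). pose proof (T_gt n).
    split. lia. split. lia. split. rewrite T_S. nia.
    intros j Ha Hb. replace j with (sft + (j - sft)) by lia. rewrite H1, H2.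
    rewrite (code_even w1 (N + K)), (code_even w2 (N + K)); auto; fold n; lia.
  - intros K N. set (k := N + K + i + 1). set (m := 2 ^ k + i). set (n := 2 * m + 1).
    assert (Hk : k < 2 ^ k) by (apply Nat.pow_gt_lin_r; lia).
    assert (Hrd : rd m = i) by (apply rd_spec; lia).
    exists (sft + T n), (sft + T (S n)). pose proof (T_gt n).
    assert (n >= k) by (unfold n, m; lia).
    split. lia. split. lia. split. rewrite T_S. nia.
    intros j Ha Hb. replace j with (sft + (j - sft)) by lia. rewrite H1, H2.
    rewrite (code_odd w1 m), (code_odd w2 m); try (fold n; lia). rewrite Hrd. auto.
Qed.

Local Close Scope R_scope.

Lemma path_ok_nth {V E} (s : E -> V) r (l : list E) e :
  path_ok s r l -> forall i, S i < length l -> r (nth i l e) (s (nth (S i) l e)).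
Proof.
  induction l as [|x t IH]; intros H i Hi; simpl in *. lia.
  destruct t as [|y t']. simpl in Hi; lia.
  destruct H as [H1 H2]. destruct i. simpl. auto.
  apply IH; auto. simpl in *; lia.
Qed.

Lemma lastE_nth {E} (l : list E) e e' : lastE l = Some e' -> e' = nth (length l - 1) l e.
Proof.
  induction l as [|x t IH]; simpl; intros H. discriminate.
  destruct t as [|y t']. inversion H; auto.
  rewrite (IH H). simpl. replace (length t' - 0) with (length t') by lia. auto.
Qed.

Definition cyc {V E} (s : E -> V) r v e0 (l : list E) : Prop :=
  1 <= length l /\ (forall i, S i < length l -> r (nth i l e0) (s (nth (S i) l e0))) /\
  s (nth 0 l e0) = v /\ r (nth (length l - 1) l e0) v.

Lemma cp_cyc {V E} (s : E -> V) r v e0 l : closed_path s r v l -> cyc s r v e0 l.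
Proof.
  intros [[Hne Hpath] [[e1 [t [Hl Hs]]] [[ek [Hlast Hr]] _]]].
  split; [|split; [|split]].
  - subst; simpl; lia.
  - apply path_ok_nth; auto.
  - subst. simpl. auto.
  - rewrite <- (lastE_nth l e0 ek Hlast). auto.
Qed.

Lemma cp_inner {V E} (s : E -> V) r v e0 l : closed_path s r v l ->
  forall i, 0 < i -> i < length l -> s (nth i l e0) <> v.
Proof.
  intros [_ [_ [_ H]]] i H1 H2. apply (H i); auto. apply nth_error_nth'. auto.
Qed.

Lemma cyc_app {V E} (s : E -> V) r v e0 a b : cyc s r v e0 a -> cyc s r v e0 b -> cyc s r v e0 (a ++ b).
Proof.
  intros [Ha1 [Ha2 [Ha3 Ha4]]] [Hb1 [Hb2 [Hb3 Hb4]]]. unfold cyc. rewrite length_app.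
  split; [lia|split; [|split]].
  - intros i Hi. destruct (lt_dec (S i) (length a)).
    + rewrite !app_nth1 by lia. auto.
    + destruct (Nat.eq_dec (S i) (length a)) as [Heq|].
      * rewrite app_nth1 by lia. rewrite app_nth2 by lia. replace (S i - length a) with 0 by lia.
        rewrite Hb3. replace i with (length a - 1) by lia. auto.
      * rewrite !app_nth2 by lia. replace (S i - length a) with (S (i - length a)) by lia. apply Hb2. lia.
  - rewrite app_nth1 by lia. auto.
  - rewrite app_nth2 by lia. replace (length a + length b - 1 - length a) with (length b - 1) by lia. auto.
Qed.

Lemma ab_ba {V E} (s : E -> V) r v (e0 : E) a b :
  closed_path s r v a -> closed_path s r v b -> a <> b -> a ++ b <> b ++ a.
Proof.
  intros Ha Hb Hab Heq.
  pose proof (cp_cyc s r v e0 a Ha) as [Ha1 [_ [Ha3 _]]].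
  pose proof (cp_cyc s r v e0 b Hb) as [Hb1 [_ [Hb3 _]]].
  destruct (lt_eq_lt_dec (length a) (length b)) as [[Hlt|Hle]|Hgt].
  - assert (H := f_equal (fun l => nth (length a) l e0) Heq). simpl in H.
    rewrite app_nth2 in H by lia. rewrite app_nth1 in H by lia.
    replace (length a - length a) with 0 in H by lia.
    apply (cp_inner s r v e0 b Hb (length a)); try lia. rewrite <- H. auto.
  - apply Hab. apply (nth_ext _ _ e0 e0). auto. intros n Hn.
    assert (H := f_equal (fun l => nth n l e0) Heq). simpl in H.
    rewrite !app_nth1 in H by lia. auto.
  - assert (H := f_equal (fun l => nth (length b) l e0) Heq). simpl in H.
    rewrite app_nth1 in H by lia. rewrite app_nth2 in H by lia.
    replace (length b - length b) with 0 in H by lia.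
    apply (cp_inner s r v e0 a Ha (length b)); try lia. rewrite H. auto.
Qed.

Lemma good_exists {V E} (s : E -> V) r v :
  (exists a b, closed_path s r v a /\ closed_path s r v b /\ a <> b) ->
  exists L (A B : list E) e0 q, Good s r v L A B e0 q.
Proof.
  intros [a [b [Ha [Hb Hab]]]].
  destruct Ha as [[Hne Hp] Hrest] eqn:Ha'. clear Ha'.
  destruct a as [|e0 a']. tauto.
  set (a := e0 :: a') in *.
  pose proof (cyc_app s r v e0 a b (cp_cyc s r v e0 a Ha) (cp_cyc s r v e0 b Hb)) as [HA1 [HA2 [HA3 HA4]]].
  pose proof (cyc_app s r v e0 b a (cp_cyc s r v e0 b Hb) (cp_cyc s r v e0 a Ha)) as [HB1 [HB2 [HB3 HB4]]].
  pose proof (ab_ba s r v e0 a b Ha Hb Hab) as Hne2.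
  assert (Hlen : length (b ++ a) = length (a ++ b)) by (rewrite !length_app; lia).
  assert (Hq : exists q, q < length (a ++ b) /\ nth q (a ++ b) e0 <> nth q (b ++ a) e0).
  { apply NNPP. intros Hno. apply Hne2. apply (nth_ext _ _ e0 e0). auto.
    intros n Hn. apply NNPP. intros H. apply Hno. eauto. }
  destruct Hq as [q [Hq1 Hq2]].
  exists (length (a ++ b)), (a ++ b), (b ++ a), e0, q. constructor; auto.
  - rewrite Hlen in HB2. auto.
  - rewrite Hlen in HB4. auto.
Qed.

Local Close Scope R_scope.

Lemma uncount_gen {V E} (S : point V E -> Prop) (emb : (nat -> bool) -> point V E) :
  (forall w, S (emb w)) -> (forall w1 w2, emb w1 = emb w2 -> forall i, w1 i = w2 i) ->
  uncountable S.
Proof.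
  intros HS Hinj [f Hf].
  set (h := fun n => epsilon (inhabits (fun _ : nat => false)) (fun w => f (emb w) = n)).
  set (dg := fun i => negb (h i i)).
  assert (Hh : f (emb (h (f (emb dg)))) = f (emb dg)).
  { unfold h. apply (epsilon_spec (inhabits (fun _ : nat => false)) (fun w => f (emb w) = f (emb dg))). eauto. }
  apply Hf in Hh; auto. pose proof (Hinj _ _ Hh (f (emb dg))) as H.
  assert (Hb : forall b : bool, b = negb b -> False) by (intros []; discriminate). exact (Hb _ H).
Qed.

Lemma IP_pf_inj {V E} s r v L (A B : list E) e0 q c1 c2 :
  Good (V:=V) s r v L A B e0 q ->
  @IP V E (pf L A B e0 c1) = IP (pf L A B e0 c2) -> forall j, c1 j = c2 j.
Proof.
  intros G H j. injection H as H. eapply pf_block_eq; eauto. rewrite H. reflexivity.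
Qed.

Lemma code_inj w1 w2 : (forall j, code w1 j = code w2 j) -> forall i, w1 i = w2 i.
Proof. intros H i. rewrite <- !(code_jr _ i). auto. Qed.

Lemma pf_agree_prefix L (E : Type) (A B : list E) e0 c1 c2 M :
  1 <= L -> (forall j, j < M -> c1 j = c2 j) -> forall e, e < M -> pf L A B e0 c1 e = pf L A B e0 c2 e.
Proof.
  intros HL H e He. unfold pf. rewrite H. auto.
  pose proof (Nat.div_le_upper_bound e L e ltac:(lia) ltac:(nia)). lia.
Qed.

Definition S2set {V E} L (A B : list E) e0 : point V E -> Prop :=
  fun x => exists w, x = IP (pf L A B e0 (code w)).

Lemma S2_InX {V E} s r v L (A B : list E) e0 q :
  Good (V:=V) s r v L A B e0 q -> forall x, S2set L A B e0 x -> InX s r x.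
Proof. intros G x [w ->]. simpl. eapply pf_path; eauto. Qed.

Lemma S2_uncount {V E} s r v L (A B : list E) e0 q :
  Good (V:=V) s r v L A B e0 q -> uncountable (S2set (V:=V) L A B e0).
Proof.
  intros G. apply (uncount_gen _ (fun w => IP (pf L A B e0 (code w)))).
  - intros w. exists w. auto.
  - intros w1 w2 H. apply code_inj. eapply IP_pf_inj; eauto.
Qed.

Lemma S2_DC1 {V E} s r p v L (A B : list E) e0 q :
  enumeration s r p -> Good (V:=V) s r v L A B e0 q -> DC1_set s r p (S2set L A B e0).
Proof.
  intros Hp G. split. eapply S2_InX; eauto.
  intros x y [w1 ->] [w2 ->] Hne.
  assert (Hd : exists i, w1 i <> w2 i).
  { apply NNPP. intros Hno. apply Hne.
    assert (w1 = w2) as ->; [|reflexivity].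
    apply functional_extensionality. intros i. apply NNPP. intros H. apply Hno. eauto. }
  assert (Hs : 0 <= 1) by lia.
  destruct (code_windows w1 w2 0 (code w1) (code w2) Hs (fun j => eq_refl) (fun j => eq_refl) Hd) as [H1 H2].
  eapply DC1_blocks; eauto.
Qed.

Definition jr_bound L q (j : nat) := maxupto (fun i => jr i * L + q) j.

Lemma S2_closed {V E} s r p v L (A B : list E) e0 q :
  enumeration s r p -> Good (V:=V) s r v L A B e0 q -> closed_X s r p (S2set L A B e0).
Proof.
  intros Hp G. pose proof (g_L _ _ _ _ _ _ _ _ G) as HL. split. eapply S2_InX; eauto.
  intros x [HX Hcl]. destruct x as [f|l A0].
  - simpl in HX.
    set (w := fun i => if excluded_middle_informative (f (jr i * L + q) = nth q A e0) then true else false).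
    exists w. f_equal. apply functional_extensionality. intros e.
    set (j := e / L).
    destruct (agree_of_close s r p f Hp HX (S (e + jr_bound L q j))) as [eps [He Hag]].
    destruct (Hcl eps He) as [y [[wM ->] Hy]].
    specialize (Hag _ Hy).
    assert (Hw : forall i, i < j -> w i = wM i).
    { intros i Hi. assert (Hb : jr i * L + q <= jr_bound L q j) by (apply (maxupto_ge (fun i => jr i * L + q)); lia).
      unfold w. rewrite (Hag (jr i * L + q)) by lia. rewrite pf_blk by (apply (g_q _ _ _ _ _ _ _ _ G)).
      rewrite code_jr. pose proof (g_qd _ _ _ _ _ _ _ _ G).
      destruct (wM i); simpl; destruct excluded_middle_informative; auto; congruence. }
    rewrite (Hag e) by lia. unfold pf. fold j. rewrite (code_local w wM j); auto.
  - exfalso. destruct (FP_far s r p (A ++ B) l A0 Hp HX) as [d0 [Hd0 Hfar]].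
    destruct (Hcl d0 Hd0) as [y [[w ->] Hy]].
    pose proof (Hfar (pf L A B e0 (code w)) ltac:(eapply pf_path; eauto) ltac:(eapply pf_inF; eauto)). lra.
Qed.

Lemma S2_perfect {V E} s r p v L (A B : list E) e0 q :
  enumeration s r p -> Good (V:=V) s r v L A B e0 q -> perfect_X s r p (S2set L A B e0).
Proof.
  intros Hp G. pose proof (g_L _ _ _ _ _ _ _ _ G) as HL. split. eapply S2_closed; eauto.
  intros x [w ->] eps He.
  destruct (close_of_agree s r p Hp eps He) as [M HM].
  set (w' := fun k => if Nat.eqb k M then negb (w k) else w k).
  exists (IP (pf L A B e0 (code w'))). split; [exists w'; auto|]. split.
  - intros H. pose proof (code_inj _ _ (IP_pf_inj _ _ _ _ _ _ _ _ _ _ G H) M) as H'.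
    unfold w' in H'. rewrite Nat.eqb_refl in H'. destruct (w M); discriminate.
  - apply HM. eapply pf_path; eauto.
    intros e He'. apply (pf_agree_prefix L E A B e0 _ _ M HL); auto.
    intros j Hj. apply code_local. intros i Hi. unfold w'.
    destruct (Nat.eqb_spec i M). lia. auto.
Qed.

Definition ext (w : nat -> bool) (l : list bool) := forall k, k < length l -> w k = nth k l false.

Lemma S2_compact {V E} s r p v L (A B : list E) e0 q :
  enumeration s r p -> Good (V:=V) s r v L A B e0 q -> compact_X s r p (S2set L A B e0).
Proof.
  intros Hp G. pose proof (g_L _ _ _ _ _ _ _ _ G) as HL. split. eapply S2_InX; eauto.
  intros I U Hopen Hcov. apply NNPP. intros Hbad0.
  set (P := fun w => @IP V E (pf L A B e0 (code w))).
  set (bad := fun l : list bool => ~ exists li : list I, forall w, ext w l -> exists i, In i li /\ U i (P w)).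
  assert (Hb0 : bad []).
  { intros [li Hli]. apply Hbad0. exists li. intros x [w ->]. apply Hli. intros k Hk. simpl in Hk. lia. }
  assert (Hstep : forall l, bad l -> bad (l ++ [true]) \/ bad (l ++ [false])).
  { intros l Hl. apply NNPP. intros Hno. apply Hl.
    destruct (NNPP _ (fun H => Hno (or_introl H))) as [l1 H1].
    destruct (NNPP _ (fun H => Hno (or_intror H))) as [l2 H2].
    exists (l1 ++ l2). intros w Hw.
    assert (Hwx : ext w (l ++ [w (length l)])).
    { intros k Hk. rewrite length_app in Hk. simpl in Hk. destruct (Nat.eq_dec k (length l)) as [->|].
      rewrite app_nth2 by lia. rewrite Nat.sub_diag. auto.
      rewrite app_nth1 by lia. apply Hw. lia. }
    destruct (w (length l)) eqn:Ew.
    - destruct (H1 w Hwx) as [i [Hi HU]]. exists i. split; auto. apply in_or_app; auto.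
    - destruct (H2 w Hwx) as [i [Hi HU]]. exists i. split; auto. apply in_or_app; auto. }
  set (nxt := fun l => if excluded_middle_informative (bad (l ++ [true])) then l ++ [true] else l ++ [false]).
  assert (Hnxt : forall l, bad l -> bad (nxt l)).
  { intros l Hl. unfold nxt. destruct excluded_middle_informative; auto.
    destruct (Hstep l Hl); tauto. }
  set (pr := fun k => Nat.iter k nxt []).
  assert (Hpr_bad : forall k, bad (pr k)).
  { induction k. exact Hb0. simpl. apply Hnxt. auto. }
  assert (Hpr_len : forall k, length (pr k) = k).
  { induction k. auto. simpl. unfold nxt at 1. destruct excluded_middle_informative;
    rewrite length_app; simpl; fold (pr k); lia. }
  assert (Hpr_pre : forall k k', k <= k' -> exists t, pr k' = pr k ++ t).
  { intros k k' Hk. induction Hk. exists []. rewrite app_nil_r. auto.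
    destruct IHHk as [t Ht]. simpl. fold (pr m). rewrite Ht. unfold nxt at 1.
    destruct excluded_middle_informative; eexists; rewrite <- app_assoc; eauto. }
  set (ws := fun i => nth i (pr (S i)) false).
  assert (Hws : forall k, ext ws (pr k)).
  { intros k i Hi. rewrite Hpr_len in Hi. unfold ws.
    destruct (Hpr_pre (S i) k ltac:(lia)) as [t ->]. rewrite app_nth1; auto. rewrite Hpr_len. lia. }
  destruct (Hcov (P ws) ltac:(exists ws; auto)) as [i0 Hi0].
  assert (HXs : InX s r (P ws)) by (simpl; eapply pf_path; eauto).
  destruct (Hopen i0 (P ws) HXs Hi0) as [eps [He Hball]].
  destruct (close_of_agree s r p Hp eps He) as [M HM].
  apply (Hpr_bad M). exists [i0]. intros w Hw. exists i0. split. simpl; auto.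
  apply Hball. simpl; eapply pf_path; eauto.
  apply HM. eapply pf_path; eauto.
  intros e He'. apply (pf_agree_prefix L E A B e0 _ _ M HL); auto.
  intros j Hj. apply code_local. intros i Hi.
  rewrite (Hws M i) by (rewrite Hpr_len; lia). rewrite (Hw i) by (rewrite Hpr_len; lia). auto.
Qed.

Local Close Scope R_scope.

Definition consb (b : bool) (c : nat -> bool) : nat -> bool :=
  fun j => match j with 0 => b | S j' => c j' end.
Definition w0 : nat -> bool := fun _ => false.
Definition dl (k : nat) : nat -> bool := fun i => Nat.eqb i k.

Definition S3set {V E} L (A B : list E) e0 : point V E -> Prop := fun x =>
  (exists w, w 0 = true /\ x = IP (pf L A B e0 (consb true (code w)))) \/
  x = IP (pf L A B e0 (consb true (code w0))) \/
  (exists k, 1 <= k /\ x = IP (pf L A B e0 (consb false (code (dl k))))).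

Lemma S3_rep {V E} L (A B : list E) e0 x : S3set (V:=V) L A B e0 x ->
  exists b w, x = IP (pf L A B e0 (consb b (code w))) /\
    (b = true <-> (w 0 = true \/ forall i, w i = false)).
Proof.
  intros [[w [Hw ->]]|[->|[k [Hk ->]]]].
  - exists true, w. split; auto. tauto.
  - exists true, w0. split; auto. split; auto.
  - exists false, (dl k). split; auto. split. discriminate.
    intros [H|H]. unfold dl in H. destruct k; [lia|discriminate].
    specialize (H k). unfold dl in H. rewrite Nat.eqb_refl in H. discriminate.
Qed.

Lemma S3_InX {V E} s r v L (A B : list E) e0 q :
  Good (V:=V) s r v L A B e0 q -> forall x, S3set L A B e0 x -> InX s r x.
Proof. intros G x Hx. destruct (S3_rep _ _ _ _ _ Hx) as [b [w [-> _]]]. simpl. eapply pf_path; eauto. Qed.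

Lemma S3_DC1 {V E} s r p v L (A B : list E) e0 q :
  enumeration s r p -> Good (V:=V) s r v L A B e0 q -> DC1_set s r p (S3set L A B e0).
Proof.
  intros Hp G. split. eapply S3_InX; eauto.
  intros x y Hx Hy Hne.
  destruct (S3_rep _ _ _ _ _ Hx) as [b1 [w1 [-> Hb1]]].
  destruct (S3_rep _ _ _ _ _ Hy) as [b2 [w2 [-> Hb2]]].
  assert (Hd : exists i, w1 i <> w2 i).
  { apply NNPP. intros Hno.
    assert (Hw : forall i, w1 i = w2 i) by (intros i; apply NNPP; intros H; apply Hno; eauto).
    assert (w1 = w2) as <- by (apply functional_extensionality; auto).
    assert (b1 = b2) as <-.
    { destruct b1, b2; auto; [symmetry|]; apply Hb2 || apply Hb1; tauto. }
    apply Hne. reflexivity. }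
  assert (Hs : 1 <= 1) by lia.
  destruct (code_windows w1 w2 1 (consb b1 (code w1)) (consb b2 (code w2)) Hs (fun j => eq_refl) (fun j => eq_refl) Hd) as [H1 H2].
  eapply DC1_blocks; eauto.
Qed.

Lemma S3_uncount {V E} s r v L (A B : list E) e0 q :
  Good (V:=V) s r v L A B e0 q -> uncountable (S3set (V:=V) L A B e0).
Proof.
  intros G. apply (uncount_gen _ (fun w => IP (pf L A B e0 (consb true (code (consb true w)))))).
  - intros w. left. exists (consb true w). auto.
  - intros w1 w2 H i.
    pose proof (IP_pf_inj _ _ _ _ _ _ _ _ _ _ G H) as H1.
    assert (H2 : forall j, code (consb true w1) j = code (consb true w2) j) by (intros j; exact (H1 (S j))).
    exact (code_inj _ _ H2 (S i)).
Qed.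

Lemma S3_z_closure {V E} s r p v L (A B : list E) e0 q :
  enumeration s r p -> Good (V:=V) s r v L A B e0 q ->
  closure_X s r p (S3set L A B e0) (IP (pf L A B e0 (consb false (code w0)))).
Proof.
  intros Hp G. pose proof (g_L _ _ _ _ _ _ _ _ G) as HL. split. simpl; eapply pf_path; eauto.
  intros eps He. destruct (close_of_agree s r p Hp eps He) as [M HM].
  exists (IP (pf L A B e0 (consb false (code (dl (S M)))))). split.
  - right. right. exists (S M). split; auto. lia.
  - apply HM. eapply pf_path; eauto.
    intros e He'. apply (pf_agree_prefix L E A B e0 _ _ M HL); auto.
    intros j Hj. destruct j; auto. simpl. apply code_local. intros i Hi.
    unfold w0, dl. destruct (Nat.eqb_spec i (S M)); auto. lia.
Qed.

Lemma S3_z_notin {V E} s r v L (A B : list E) e0 q :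
  Good (V:=V) s r v L A B e0 q ->
  ~ S3set (V:=V) L A B e0 (IP (pf L A B e0 (consb false (code w0)))).
Proof.
  intros G [[w [_ H]]|[H|[k [Hk H]]]].
  - pose proof (IP_pf_inj _ _ _ _ _ _ _ _ _ _ G H 0). discriminate.
  - pose proof (IP_pf_inj _ _ _ _ _ _ _ _ _ _ G H 0). discriminate.
  - pose proof (IP_pf_inj _ _ _ _ _ _ _ _ _ _ G H) as H1.
    assert (H2 : forall j, code w0 j = code (dl k) j) by (intros j; exact (H1 (S j))).
    pose proof (code_inj _ _ H2 k) as H3. unfold w0, dl in H3. rewrite Nat.eqb_refl in H3. discriminate.
Qed.

Lemma S3_not_closed {V E} s r p v L (A B : list E) e0 q :
  enumeration s r p -> Good (V:=V) s r v L A B e0 q -> ~ closed_X s r p (S3set L A B e0).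
Proof.
  intros Hp G [_ Hc]. eapply S3_z_notin; eauto. apply Hc. eapply S3_z_closure; eauto.
Qed.

Lemma S3_closure_not_DC1 {V E} s r p v L (A B : list E) e0 q :
  enumeration s r p -> Good (V:=V) s r v L A B e0 q ->
  ~ DC1_set s r p (closure_X s r p (S3set L A B e0)).
Proof.
  intros Hp G [_ HD]. pose proof (g_L _ _ _ _ _ _ _ _ G) as HL.
  set (c1 := consb true (code w0)). set (c2 := consb false (code w0)).
  assert (Hw : closure_X s r p (S3set L A B e0) (IP (pf L A B e0 c1))).
  { split. simpl; eapply pf_path; eauto. intros eps He. exists (IP (pf L A B e0 c1)).
    split. right; left; auto. rewrite d_refl. lra. }
  assert (Hne : @IP V E (pf L A B e0 c1) <> IP (pf L A B e0 c2)).
  { intros H. pose proof (IP_pf_inj _ _ _ _ _ _ _ _ _ _ G H 0). discriminate. }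
  destruct (HD _ _ Hw (S3_z_closure s r p v L A B e0 q Hp G) Hne) as [_ [δ0 [Hδ0 [Hli _]]]].
  destruct (Hli (1/2)%R ltac:(lra) (2 * L)) as [n [Hn HPhi]].
  assert (Hcl : forall k, L <= k -> k < S n -> (Dk s p (IP (pf L A B e0 c1)) (IP (pf L A B e0 c2)) k < δ0)%R).
  { intros k Hk _. unfold Dk. rewrite !iter_sigma_IP.
    replace (IP (fun i => pf L A B e0 c1 (k + i))) with (@IP V E (fun i => pf L A B e0 c2 (k + i))).
    rewrite d_refl. lra.
    f_equal. apply functional_extensionality. intros i. unfold pf.
    assert (1 <= (k + i) / L) by (apply Nat.div_le_lower_bound; lia).
    destruct ((k + i) / L); [lia|]. reflexivity. }
  pose proof (cc_lo s p δ0 _ _ L (S n) Hcl) as Hc.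
  revert HPhi. unfold Phi. apply Rle_not_lt. left. rewrite Rplus_0_l.
  apply div_gt_aux. apply lt_0_INR. lia.
  apply le_INR in Hc. rewrite minus_INR in Hc by lia. rewrite S_INR in Hc.
  assert (H : (INR (2 * L) <= INR n)%R) by (apply le_INR; lia). rewrite mult_INR in H. simpl in H.
  assert (H1 : (1 <= INR L)%R) by (apply (le_INR 1); lia). fold c2. lra.
Qed.

Local Close Scope R_scope.

Theorem proposition3p8 (V E : Type) (s : E -> V) (r : E -> V -> Prop)
  (HV : countable V) (HE : countable E)
  (Hr : forall e, exists x, r e x)
  (Hnosink : forall w, exists e, s e = w)
  (p : nat -> upath V E) (Hp : enumeration s r p)
  (v : V)
  (Hv : exists a b, closed_path s r v a /\ closed_path s r v b /\ a <> b) :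
  distrib_chaotic_1 s r p /\
  (exists S, uncountable S /\ perfect_X s r p S /\ compact_X s r p S /\
             DC1_set s r p S) /\
  (exists S, uncountable S /\ DC1_set s r p S /\ ~ closed_X s r p S /\
             ~ DC1_set s r p (closure_X s r p S)).
Proof.
  destruct (good_exists s r v Hv) as [L [A [B [e0 [q G]]]]].
  split; [|split].
  - exists (S2set L A B e0). split. eapply S2_DC1; eauto. eapply S2_uncount; eauto.
  - exists (S2set L A B e0). split. eapply S2_uncount; eauto.
    split. eapply S2_perfect; eauto. split. eapply S2_compact; eauto. eapply S2_DC1; eauto.
  - exists (S3set L A B e0). split. eapply S3_uncount; eauto.
    split. eapply S3_DC1; eauto. split. eapply S3_not_closed; eauto.
    eapply S3_closure_not_DC1; eauto.
Qed.
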